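(* Let $k$ be a positive integer and let $G$ be a graph on $m\ge NPO(k)$ vertices. Let $d_1\ge d_2\ge\cdots\ge d_m$ be the vertex degrees of $G$ and $\lambda_1\ge\lambda_2\ge\cdots\ge\lambda_m$ the eigenvalues of the Laplacian matrix $L(G)$. Then $\lambda_k\ge d_{NPO(k)}$.
   Context: All graphs are finite, simple, unweighted and undirected; $A(G)$ denotes the adjacency matrix and $L(G)=D(G)-A(G)$ the Laplacian matrix, where $D(G)$ is the diagonal matrix of vertex degrees. Eigenvalues are counted with multiplicity. For a positive integer $k$, $NPO(k)$ is the smallest integer $n$ such that the adjacency matrix of every graph with at least $n$ vertices has at least $k$ nonpositive eigenvalues. *)

(* Defs.v *)
From HB Require Import structures.
From mathcomp Require Import all_boot all_order all_algebra all_field.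
Set Implicit Arguments. Unset Strict Implicit. Unset Printing Implicit Defensive.
Import Order.TTheory GRing.Theory Num.Theory.
Local Open Scope ring_scope.

Definition simple_graph (n : nat) (e : rel 'I_n) : Prop :=
  (forall x y, e x y = e y x) /\ (forall x, ~~ e x x).

Definition deg (n : nat) (e : rel 'I_n) (i : 'I_n) : nat := #|[set j | e i j]|.

Definition adj_mx (n : nat) (e : rel 'I_n) : 'M[algC]_n :=
  \matrix_(i, j) (e i j)%:R.
Definition lap_mx (n : nat) (e : rel 'I_n) : 'M[algC]_n :=
  \matrix_(i, j) ((i == j)%:R * (deg e i)%:R) - adj_mx e.

Definition eigs (n : nat) (M : 'M[algC]_n) : seq algC :=
  sval (closed_field_poly_normal (char_poly M)).

Definition eigs_sorted (n : nat) (M : 'M[algC]_n) : seq algC :=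
  sort (fun x y => y <= x) (eigs M).

(* i-th largest eigenvalue, 1-indexed *)
Definition lambda (n : nat) (M : 'M[algC]_n) (i : nat) : algC :=
  nth 0 (eigs_sorted M) i.-1.

(* degrees sorted nonincreasingly: d_1 >= ... >= d_n, and d_i (1-indexed) *)
Definition degs_sorted (n : nat) (e : rel 'I_n) : seq nat :=
  sort geq [seq deg e i | i <- enum 'I_n].
Definition dsorted (n : nat) (e : rel 'I_n) (i : nat) : nat :=
  nth 0%N (degs_sorted e) i.-1.

Definition n_nonpos_adj (n : nat) (e : rel 'I_n) : nat :=
  count (fun x : algC => x <= 0) (eigs (adj_mx e)).

Definition npo_prop (k n : nat) : Prop :=
  forall (m : nat) (e : rel 'I_m), (n <= m)%N -> simple_graph e ->
    (k <= n_nonpos_adj e)%N.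

Definition is_NPO (k N : nat) : Prop :=
  npo_prop k N /\ (forall n, npo_prop k n -> (N <= n)%N).

(* Main.v *)
Require Import Defs.
From HB Require Import structures.
From mathcomp Require Import all_boot all_order all_algebra all_field.
Import Order.TTheory GRing.Theory Num.Theory.
Local Open Scope ring_scope.

Lemma count_sorted_prefix (T : Type) (leT : rel T) (x0 : T) (s : seq T) (j : nat) :
  transitive leT -> reflexive leT -> sorted leT s -> (j < size s)%N ->
  (j.+1 <= count (fun x => leT x (nth x0 s j)) s)%N.
Proof.
move=> tr rf so js.
set p := (fun x => leT x (nth x0 s j)).
rewrite -(cat_take_drop j.+1 s) count_cat.
have -> : count p (take j.+1 s) = j.+1.
  have : all p (take j.+1 s).
    apply/(all_nthP x0) => i; rewrite size_take_min => ij; have ij2 : (i <= j)%N by move: ij; rewrite leq_min ltnS => /andP[].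
    rewrite nth_take //; apply: (sorted_leq_nth tr rf) => //; rewrite inE.
      exact: leq_ltn_trans js.
  by rewrite all_count size_take_min (minn_idPl js) => /eqP.
exact: leq_addr.
Qed.

Lemma sorted_count_nth (s : seq algC) (d : algC) (k : nat) :
  all (fun x => x \is Num.real) s -> d \is Num.real ->
  sorted (fun x y => y <= x) s -> (0 < k)%N ->
  (k <= count (fun x => (d <= x)%R) s)%N -> d <= nth 0 s k.-1.
Proof.
move=> sr dr so k0 kc.
set p := (fun x => (d <= x)%R) in kc *.
have ks : (k.-1 < size s)%N.
  rewrite prednK //; apply: leq_trans kc _; exact: count_size.
have nr : nth 0 s k.-1 \is Num.real by apply: (allP sr); exact: mem_nth.
case: (real_leP dr nr) => // lt.
move: kc; rewrite -(cat_take_drop k.-1 s) count_cat.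
have -> : count p (drop k.-1 s) = 0%N.
  apply/eqP; rewrite -leqn0 leqNgt -has_count; apply/hasPn => x.
  move=> /(nthP 0) [i]; rewrite size_drop => ilt <-.
  rewrite nth_drop /p /= -real_ltNge //; last first.
    by apply: (allP sr); apply: mem_nth; rewrite -ltn_subRL.
  apply: le_lt_trans lt.
  have : (fun x y => y <= x) (nth 0 s k.-1) (nth 0 s (k.-1 + i)).
    apply: (sorted_leq_nth (leT:=fun x y : algC => y <= x)).
    - by move=> a b c /= h1 h2; exact: le_trans h2 h1.
    - by move=> a /=.
    - exact: so.
    - by rewrite inE.
    - by rewrite inE -ltn_subRL.
    - exact: leq_addr.
  by [].
rewrite addn0 => h; have := leq_trans h (count_size _ _).
rewrite size_take ks; by case: (k) k0 => // k1 _ /=; rewrite ltnn.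
Qed.
Lemma char_poly_similar n (P D : 'M[algC]_n) : P \in unitmx ->
  char_poly (invmx P *m D *m P) = char_poly D.
Proof.
move=> Pu.
have e1 : map_mx polyC (invmx P) *m map_mx polyC P = 1%:M.
  by rewrite -map_mxM mulVmx // map_mx1.
have e2 : map_mx polyC P *m map_mx polyC (invmx P) = 1%:M.
  by rewrite -map_mxM mulmxV // map_mx1.
have E : char_poly_mx (invmx P *m D *m P) =
   map_mx polyC (invmx P) *m char_poly_mx D *m map_mx polyC P.
  rewrite /char_poly_mx mulmxBr mulmxBl !map_mxM; congr (_ - _).
  by rewrite -mulmxA -scalar_mxC mulmxA e1 mul1mx.
rewrite /char_poly E !det_mulmx mulrC mulrA -det_mulmx e2 det1 mul1r //.
Qed.

Lemma eigs_normal n (M : 'M[algC]_n) : M \is normalmx ->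
  perm_eq (eigs M) [seq spectral_diag M 0 i | i <- enum 'I_n].
Proof.
move=> /orthomx_spectralP E.
have Hc : char_poly M = \prod_(z <- [seq spectral_diag M 0 i | i <- enum 'I_n]) ('X - z%:P).
  rewrite {1}E char_poly_similar ?spectral_unit // char_poly_trig ?diag_mx_is_trig //.
  rewrite big_map big_enum /=; apply: eq_bigr => i _; by rewrite mxE eqxx mulr1n.
rewrite /eigs; case: closed_field_poly_normal => r /= Hs.
rewrite (monicP (char_poly_monic _)) scale1r in Hs.
apply: prod_XsubC_eq; rewrite -Hs; exact: Hc.
Qed.

Section S. Local Open Scope sesquilinear_scope.
Lemma qf_diag n (v : 'rV[algC]_n) (D : 'rV_n) :
  (v *m diag_mx D *m v ^t*) 0 0 = \sum_i D 0 i * (v 0 i * (v 0 i)^*).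
Proof.
rewrite mxE; apply: eq_bigr => i _; rewrite mul_mx_diag !mxE.
by rewrite (mulrC (v 0 i)) -mulrA.
Qed.

Lemma trC_mul m n p (A : 'M[algC]_(m, n)) (B : 'M_(n, p)) : (A *m B) ^t* = B ^t* *m A ^t*.
Proof. by rewrite trmx_mul map_mxM. Qed.

Lemma qf_unitary n (P : 'M[algC]_n) (X c : 'rV_n) : P \is unitarymx ->
  (c *m P) *m (invmx P *m diag_mx X *m P) *m (c *m P) ^t* = c *m diag_mx X *m c ^t*.
Proof.
move=> Pu; have PP : P *m P ^t* = 1%:M by apply/unitarymxP.
rewrite invmx_unitary // trC_mul !mulmxA -(mulmxA c P) PP mulmx1.
by rewrite -(mulmxA _ P) PP mulmx1.
Qed.

Lemma norm_unitary n (P : 'M[algC]_n) (c : 'rV_n) : P \is unitarymx ->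
  (c *m P) *m (c *m P) ^t* = c *m c ^t*.
Proof.
move=> Pu; have PP : P *m P ^t* = 1%:M by apply/unitarymxP.
by rewrite trC_mul !mulmxA -(mulmxA c) PP mulmx1.
Qed.

Lemma qf_id n (v : 'rV[algC]_n) :
  (v *m v ^t*) 0 0 = \sum_i (v 0 i * (v 0 i)^*).
Proof. by rewrite mxE; apply: eq_bigr => i _; rewrite !mxE. Qed.

Lemma herm_of n (M : 'M[algC]_n) : (forall i j, M i j = M j i) ->
  (forall i j, M i j \is Num.real) -> M \is hermsymmx.
Proof.
move=> s r; apply/is_hermitianmxP; apply/matrixP => i j.
rewrite !mxE /= expr0 mul1r conj_Creal //.
Qed.

Lemma rowsub1_tr r n (f : 'I_r -> 'I_n) : injective f ->
  rowsub f (1%:M : 'M[algC]_n) *m (rowsub f 1%:M)^T = 1%:M.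
Proof.
move=> fi; apply/matrixP => i j; rewrite !mxE (bigD1 (f j)) //= big1.
  by rewrite !mxE eqxx mulr1 addr0 (inj_eq fi).
by move=> k kn; rewrite !mxE (eq_sym (f j)) (negbTE kn) mulr0.
Qed.

Lemma rank_rowsub1 r n (f : 'I_r -> 'I_n) : injective f ->
  \rank (rowsub f (1%:M : 'M[algC]_n)) = r.
Proof.
move=> fi; apply/eqP; rewrite eqn_leq rank_leq_row /=.
rewrite -{1}(mxrank1 algC r) -(@rowsub1_tr r n f fi); exact: mxrankM_maxl.
Qed.
End S.

Lemma count_enum_card (T : finType) (p : pred T) : count p (enum T) = #|[set x | p x]|.
Proof.
rewrite cardsE cardE /enum_mem size_filter.
have -> : [seq x <- Finite.enum T | mem T x] = Finite.enum T by apply/all_filterP/allP.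
by [].
Qed.

From mathcomp Require Import zify.
Local Open Scope sesquilinear_scope.

Theorem mainTheorem13 (k N m : nat) (e : rel 'I_m) :
  (0 < k)%N -> is_NPO k N -> (N <= m)%N -> simple_graph e ->
  (dsorted e N)%:R <= lambda (lap_mx e) k.
Proof.
move=> k0 [npoN _] NM sg.
have [s1 s2] := sg.
set dn := dsorted e N.
have HN : (N <= #|[set i | (dn <= deg e i)%N]|)%N.
  have [->|N0] := posnP N; first by [].
  have sz : size (degs_sorted e) = m by rewrite size_sort size_map size_enum_ord.
  have := @count_sorted_prefix _ geq 0%N (degs_sorted e) N.-1.
  rewrite /dn /dsorted.
  have gt : transitive geq by move=> a b c h1 h2; exact: leq_trans h2 h1.
  move=> /(_ gt (@leqnn) (sort_sorted (fun a b => leq_total b a) _)).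
  rewrite sz prednK // => /(_ NM).
  rewrite /degs_sorted count_sort count_map count_enum_card.
  by [].
set S := [set i | (dn <= deg e i)%N] in HN.
pose f : 'I_N -> 'I_m := fun i => enum_val (widen_ord HN i).
have fi : injective f.
  by move=> i j /enum_val_inj /(congr1 val) /= /val_inj.
have fS : forall i, (dn <= deg e (f i))%N.
  by move=> i; have := enum_valP (widen_ord HN i); rewrite inE.
pose e' : rel 'I_N := fun i j => e (f i) (f j).
have sg' : simple_graph e' by split => *; [apply: s1 | apply: s2].
have kW := npoN N e' (leqnn N) sg'.
pose A' := adj_mx e'.
have hA' : A' \is hermsymmx.
  apply: herm_of => i j; rewrite !mxE ?realn //.
  by rewrite /e' s1.
set Q := spectralmx A'; set Y := spectral_diag A'.
have nA := @eigs_normal _ A' (hermitian_normalmx hA').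
move: kW; rewrite /n_nonpos_adj -/A' (permP nA) count_map count_enum_card => kW.
set SW := [set x | Y 0 x <= 0] in kW.
set L := lap_mx e.
have hL : L \is hermsymmx.
  apply: herm_of => i j; rewrite !mxE.
    by rewrite s1 (eq_sym j); case: eqP => [->|]; rewrite ?mul0r.
  by rewrite rpredB ?rpredM ?realn.
set P := spectralmx L; set X := spectral_diag L.
have nL := @eigs_normal _ L (hermitian_normalmx hL).
have XR : forall i, X 0 i \is Num.real.
  by move=> i; have /mxOverP := hermitian_spectral_diag_real hL; apply.
have allR : all (fun x => x \is Num.real) (eigs L).
  by apply/allP => x; rewrite (perm_mem nL) => /mapP [i _ ->].
rewrite /lambda /eigs_sorted; apply: sorted_count_nth => //.
- by apply/allP => x; rewrite mem_sort => /(allP allR).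
- apply: (sort_sorted_in (P := Num.real)) => // x y xr yr.
  exact: real_leVge.
rewrite count_sort (permP nL) count_map count_enum_card.
set SD := [set x | dn%:R <= X 0 x].
rewrite leqNgt; apply/negP => lt.
set SU := [set x | X 0 x < dn%:R].
have cU : (#|SU| + #|SD| = m)%N.
  have -> : SD = ~: SU.
    by apply/setP => i; rewrite !inE real_ltNge ?negbK ?realn.
  by rewrite cardsC card_ord.
pose g : 'I_#|SU| -> 'I_m := enum_val.
pose h : 'I_#|SW| -> 'I_N := enum_val.
have gi : injective g by exact: enum_val_inj.
have hi : injective h by exact: enum_val_inj.
pose E := rowsub f (1%:M : 'M[algC]_m).
pose U := rowsub g (1%:M : 'M[algC]_m) *m P.
pose W := rowsub h (1%:M : 'M[algC]_N) *m Q *m E.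
have Pu : P \is unitarymx by exact: spectral_unitarymx.
have Qu : Q \is unitarymx by exact: spectral_unitarymx.
have Ef : row_free E by rewrite /row_free rank_rowsub1.
have rU : \rank U = #|SU|.
  by rewrite mxrankMfree ?rank_rowsub1 // row_free_unit unitarymx_unit.
have rW : \rank W = #|SW|.
  by rewrite !mxrankMfree ?rank_rowsub1 // row_free_unit unitarymx_unit.
have capnz : (U :&: W)%MS != 0.
  rewrite -mxrank_eq0; apply/eqP => r0.
  have := mxrank_sum_cap U W; rewrite r0 addn0 rU rW.
  have := rank_leq_col (U + W)%MS; lia.
have [i xnz] : exists i, row i (U :&: W)%MS != 0.
  apply/existsP; apply: contraR capnz; rewrite negb_exists => /forallP H.
  by apply/eqP/row_matrixP => i; rewrite row0; apply/eqP; rewrite -[_ == _]negbK H.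
set x := row i (U :&: W)%MS in xnz.
have xU : (x <= U)%MS := submx_trans (row_sub _ _) (capmxSl _ _).
have xW : (x <= W)%MS := submx_trans (row_sub _ _) (capmxSr _ _).
have EL : L = invmx P *m diag_mx X *m P.
  exact/orthomx_spectralP/hermitian_normalmx.
have EA : A' = invmx Q *m diag_mx Y *m Q.
  exact/orthomx_spectralP/hermitian_normalmx.
set d : algC := dn%:R.
have [c xc] := submxP xU.
set c' := c *m rowsub g (1%:M : 'M[algC]_m).
have xc' : x = c' *m P by rewrite xc /U mulmxA.
have c'0 : forall j, j \notin SU -> c' 0 j = 0.
  move=> j jn; rewrite !mxE big1 // => l _; rewrite !mxE.
  have : g l != j by apply: contraNneq jn => <-; exact: enum_valP.
  by move=> /negbTE ->; rewrite mulr0.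
have qU : (x *m L *m x ^t*) 0 0 = \sum_j X 0 j * (c' 0 j * (c' 0 j)^*).
  by rewrite xc' EL qf_unitary // qf_diag.
have nU : (x *m x ^t*) 0 0 = \sum_j (c' 0 j * (c' 0 j)^*).
  by rewrite xc' norm_unitary // qf_id.
have qlt : (x *m L *m x ^t*) 0 0 < d * (x *m x ^t*) 0 0.
  rewrite qU nU mulr_sumr -subr_gt0 -sumrB.
  have tge : forall j : 'I_m, true ->
      0 <= d * (c' 0 j * (c' 0 j)^*) - X 0 j * (c' 0 j * (c' 0 j)^*).
    move=> j _; rewrite -mulrBl.
    have [jS|jS] := boolP (j \in SU).
      apply: mulr_ge0; last exact: mul_conjC_ge0.
      by move: jS; rewrite inE subr_ge0 => /ltW.
    by rewrite c'0 // mul0r mulr0.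
  rewrite lt_def sumr_ge0 ?andbT //; apply/negP => /eqP s0.
  have := psumr_eq0P tge s0 => H.
  have : c' == 0.
    apply/eqP/rowP => j; rewrite [in RHS]mxE.
    have [jS|jS] := boolP (j \in SU); last exact: c'0.
    have := H j isT; rewrite -mulrBl => /eqP; rewrite mulf_eq0 mul_conjC_eq0.
    case/orP => [|/eqP //]; rewrite subr_eq0 => /eqP dX.
    by move: jS; rewrite inE -dX ltxx.
  by move=> /eqP c'z; move: xnz; rewrite xc' c'z mul0mx eqxx.
have [b xb] := submxP xW.
set b' := b *m rowsub h (1%:M : 'M[algC]_N).
set y := b' *m Q.
have xy : x = y *m E by rewrite xb /W /y !mulmxA.
have b'0 : forall j, j \notin SW -> b' 0 j = 0.
  move=> j jn; rewrite !mxE big1 // => l _; rewrite !mxE.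
  have : h l != j by apply: contraNneq jn => <-; exact: enum_valP.
  by move=> /negbTE ->; rewrite mulr0.
have EtE : E ^t* = E^T.
  by apply/matrixP => a j; rewrite !mxE conjC_nat.
have EE : E *m E ^t* = 1%:M by rewrite EtE rowsub1_tr.
have ELE : E *m L *m E ^t* = diag_mx (\row_j (deg e (f j))%:R) - A'.
  rewrite EtE; apply/matrixP => a j; rewrite mxE (bigD1 (f j)) //= big1.
    rewrite addr0 /E mul_rowsub_mx mul1mx !mxE eqxx mulr1 (inj_eq fi).
    by case: eqP; rewrite ?mul1r ?mul0r ?mulr1n ?mulr0n.

  move=> l ln; rewrite !mxE (eq_sym (f j)) (negbTE ln) mulr0 //.
have nW : (x *m x ^t*) 0 0 = \sum_j (y 0 j * (y 0 j)^*).
  by rewrite xy trC_mul mulmxA -(mulmxA y) EE mulmx1 qf_id.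
  have sub00 : forall (A B : 'M[algC]_1), (A - B) 0 0 = A 0 0 - B 0 0 by move=> A B; rewrite !mxE.
have qW : (x *m L *m x ^t*) 0 0 =
   \sum_j (deg e (f j))%:R * (y 0 j * (y 0 j)^*) -
   \sum_j Y 0 j * (b' 0 j * (b' 0 j)^*).
  rewrite xy trC_mul !mulmxA -(mulmxA y) -(mulmxA y) ELE mulmxBr mulmxBl sub00.
  rewrite qf_diag /y EA qf_unitary // qf_diag.
  by congr (_ - _); apply: eq_bigr => j _; rewrite mxE.
have qge : d * (x *m x ^t*) 0 0 <= (x *m L *m x ^t*) 0 0.
  rewrite qW nW mulr_sumr -(subr0 (\sum_i d * _)); apply: lerB.
    apply: ler_sum => j _; apply: ler_wpM2r; first exact: mul_conjC_ge0.
    by rewrite ler_nat.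
  apply: sumr_le0 => j _.
  have [jS|jS] := boolP (j \in SW).
    apply: mulr_le0_ge0; last exact: mul_conjC_ge0.
    by move: jS; rewrite inE.
  by rewrite b'0 // mul0r mulr0.
by have := lt_le_trans qlt qge; rewrite ltxx.
Qed.
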